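(* Let $p>1$ and consider, for $A\in\mathbb R^{m\times N}$, $y\in\mathbb R^m$, $\eta>0$, the problem $\min_{x\in\mathbb R^N}\|Ax-y\|_2$ subject to $\|x\|_p\le\eta$. (i) If $A$ has full row rank and $0<\eta<\min_{Ax=y}\|x\|_p$, then this problem has a unique optimal solution $x^*$, and there is a unique Lagrange multiplier $\mu$ satisfying the KKT conditions $A^T(Ax^*-y)+\mu\nabla f(x^* )=0$, $0\le\mu\perp f(x^* )-\eta^p\le0$ (with $f(x)=\|x\|_p^p$); moreover $\mu>0$ and $\|x^*\|_p=\eta$. (ii) If every $m\times m$ submatrix of $A$ is invertible (with $N\ge m$), $y\ne0$, and $0<\eta<\min_{Ax=y}\|x\|_p$, then the unique optimal solution satisfies $|\mathrm{supp}(x^* )|\ge N-m+1$.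
   Context: $\|x\|_p:=(\sum_i|x_i|^p)^{1/p}$; $\mathrm{supp}(x)=\{i:x_i\ne0\}$. $a\perp b$ for scalars means $ab=0$. *)

(* Defs.v *)
From Stdlib Require Import Reals Lra Lia List.
Open Scope R_scope.

(* Vectors in R^n are functions nat -> R, only indices < n matter.
   Matrices in R^{m x N} are functions nat -> nat -> R (row, column). *)

Fixpoint rsum (n : nat) (f : nat -> R) : R :=
  match n with
  | O => 0
  | S k => rsum k f + f k
  end.

(* |t|^a for real exponent a > 0, with the convention 0^a = 0 *)
Definition abspow (t a : R) : R :=
  if Req_dec_T t 0 then 0 else Rpower (Rabs t) a.

Definition pnorm (p : R) (N : nat) (x : nat -> R) : R :=
  abspow (rsum N (fun i => abspow (x i) p)) (1 / p).

Definition fpow (p : R) (N : nat) (x : nat -> R) : R :=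
  rsum N (fun i => abspow (x i) p).

Definition sgn (t : R) : R :=
  if Rlt_dec 0 t then 1 else if Rlt_dec t 0 then -1 else 0.
Definition grad_fpow (p : R) (x : nat -> R) (i : nat) : R :=
  p * sgn (x i) * abspow (x i) (p - 1).

Definition matvec (N : nat) (A : nat -> nat -> R) (x : nat -> R) : nat -> R :=
  fun i => rsum N (fun j => A i j * x j).

Definition tmatvec (m : nat) (A : nat -> nat -> R) (v : nat -> R) : nat -> R :=
  fun j => rsum m (fun i => A i j * v i).

Definition norm2 (m : nat) (v : nat -> R) : R :=
  sqrt (rsum m (fun i => v i * v i)).

Definition resid (m N : nat) (A : nat -> nat -> R) (y x : nat -> R) : nat -> R :=
  fun i => matvec N A x i - y i.

Definition solves (m N : nat) (A : nat -> nat -> R) (y x : nat -> R) : Prop :=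
  forall i, (i < m)%nat -> matvec N A x i = y i.

Definition optimal (p : R) (m N : nat) (A : nat -> nat -> R) (y : nat -> R)
    (eta : R) (x : nat -> R) : Prop :=
  pnorm p N x <= eta /\
  forall z : nat -> R, pnorm p N z <= eta ->
    norm2 m (resid m N A y x) <= norm2 m (resid m N A y z).

Definition full_row_rank (m N : nat) (A : nat -> nat -> R) : Prop :=
  forall c : nat -> R,
    (forall j, (j < N)%nat -> tmatvec m A c j = 0) ->
    forall i, (i < m)%nat -> c i = 0.

Definition invertible (n : nat) (M : nat -> nat -> R) : Prop :=
  exists B : nat -> nat -> R,
    (forall i j, (i < n)%nat -> (j < n)%nat ->
       rsum n (fun k => M i k * B k j) = if Nat.eqb i j then 1 else 0) /\
    (forall i j, (i < n)%nat -> (j < n)%nat ->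
       rsum n (fun k => B i k * M k j) = if Nat.eqb i j then 1 else 0).

(* every m x m submatrix (choice of m distinct columns, in increasing order) is invertible *)
Definition all_square_submatrices_invertible (m N : nat) (A : nat -> nat -> R) : Prop :=
  forall s : nat -> nat,
    (forall k l, (k < l)%nat -> (l < m)%nat -> (s k < s l)%nat) ->
    (forall k, (k < m)%nat -> (s k < N)%nat) ->
    invertible m (fun i k => A i (s k)).

(* eta is strictly less than min_{Ax=y} ||x||_p (the minimum exists) *)
Definition below_min_norm (p : R) (m N : nat) (A : nat -> nat -> R) (y : nat -> R)
    (eta : R) : Prop :=
  exists x0 : nat -> R, solves m N A y x0 /\
    (forall x, solves m N A y x -> pnorm p N x0 <= pnorm p N x) /\
    eta < pnorm p N x0.

Definition kkt (p : R) (m N : nat) (A : nat -> nat -> R) (y : nat -> R)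
    (eta : R) (x : nat -> R) (mu : R) : Prop :=
  (forall j, (j < N)%nat ->
     tmatvec m A (resid m N A y x) j + mu * grad_fpow p x j = 0) /\
  0 <= mu /\ fpow p N x - Rpower eta p <= 0 /\
  mu * (fpow p N x - Rpower eta p) = 0.

Definition supp_card (N : nat) (x : nat -> R) : nat :=
  length (filter (fun i => if Req_dec_T (x i) 0 then false else true) (seq 0 N)).

(* Main.v *)
Require Import Defs.
From Stdlib Require Import Reals List Lra Lia Classical ClassicalEpsilon ZArith.
Open Scope R_scope.

Lemma rsum_ext n f g : (forall i, (i < n)%nat -> f i = g i) -> rsum n f = rsum n g.
Proof. induction n; simpl; intros H; auto. rewrite IHn by (intros; apply H; lia). rewrite H by lia. auto. Qed.

Lemma rsum_plus n f g : rsum n (fun i => f i + g i) = rsum n f + rsum n g.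
Proof. induction n; simpl; [lra|rewrite IHn; lra]. Qed.

Lemma rsum_scal n a f : rsum n (fun i => a * f i) = a * rsum n f.
Proof. induction n; simpl; [lra|rewrite IHn; lra]. Qed.

Lemma rsum_zero n : rsum n (fun _ => 0) = 0.
Proof. induction n; simpl; [lra|rewrite IHn; lra]. Qed.

Lemma rsum_swap m N F : rsum m (fun i => rsum N (fun j => F i j)) = rsum N (fun j => rsum m (fun i => F i j)).
Proof. induction m; simpl. rewrite rsum_zero; auto. rewrite IHm, <- rsum_plus. auto. Qed.

Lemma rsum_le n f g : (forall i, (i < n)%nat -> f i <= g i) -> rsum n f <= rsum n g.
Proof. induction n; simpl; intros H; [lra|]. assert (H1 := H n (Nat.lt_succ_diag_r n)). assert (rsum n f <= rsum n g) by (apply IHn; intros; apply H; lia). lra. Qed.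

Lemma rsum_nonneg n f : (forall i, (i < n)%nat -> 0 <= f i) -> 0 <= rsum n f.
Proof. intros H. rewrite <- (rsum_zero n). apply rsum_le; auto. Qed.

Lemma rsum_lt n f g : (forall i, (i < n)%nat -> f i <= g i) -> (exists j, (j < n)%nat /\ f j < g j) -> rsum n f < rsum n g.
Proof. induction n; simpl; intros H [j [Hj Hfj]]; [lia|].
  destruct (Nat.eq_dec j n) as [->|Hne].
  - assert (rsum n f <= rsum n g) by (apply rsum_le; intros; apply H; lia). lra.
  - assert (rsum n f < rsum n g) by (apply IHn; [intros; apply H; lia| exists j; split; [lia|auto]]).
    assert (H2 := H n (Nat.lt_succ_diag_r n)). lra. Qed.

Lemma rsum_term_le n f j : (forall i, (i < n)%nat -> 0 <= f i) -> (j < n)%nat -> f j <= rsum n f.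
Proof. induction n; simpl; intros H Hj; [lia|].
  assert (0 <= rsum n f) by (apply rsum_nonneg; intros; apply H; lia).
  destruct (Nat.eq_dec j n) as [->|Hne]. lra.
  assert (f j <= rsum n f) by (apply IHn; [intros; apply H; lia|lia]).
  assert (H2 := H n (Nat.lt_succ_diag_r n)). lra. Qed.

Lemma rsum_sq_zero n f : rsum n (fun i => f i * f i) <= 0 -> forall i, (i < n)%nat -> f i = 0.
Proof. intros H i Hi. destruct (Req_dec (f i) 0) as [E|E]; auto. exfalso.
  assert (rsum n (fun _ => 0) < rsum n (fun i => f i * f i)).
  { apply rsum_lt. intros; nra. exists i; split; auto. assert (0 < f i * f i) by (apply Rsqr_pos_lt in E; unfold Rsqr in E; auto). lra. }
  rewrite rsum_zero in H0. lra. Qed.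

Lemma abspow_0 a : abspow 0 a = 0.
Proof. unfold abspow. destruct (Req_dec_T 0 0); auto. congruence. Qed.

Lemma abspow_nz t a : t <> 0 -> abspow t a = Rpower (Rabs t) a.
Proof. unfold abspow. destruct (Req_dec_T t 0); auto. congruence. Qed.

Lemma Rpower_pos x a : 0 < Rpower x a.
Proof. unfold Rpower. apply exp_pos. Qed.

Lemma abspow_nonneg t a : 0 <= abspow t a.
Proof. destruct (Req_dec t 0) as [->|E]. rewrite abspow_0; lra. rewrite abspow_nz by auto. left; apply Rpower_pos. Qed.

Lemma abspow_pos t a : t <> 0 -> 0 < abspow t a.
Proof. intros E. rewrite abspow_nz by auto. apply Rpower_pos. Qed.

Lemma dpl_loc f g x l r : 0 < r -> (forall z, Rabs (z - x) < r -> f z = g z) ->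
  derivable_pt_lim g x l -> derivable_pt_lim f x l.
Proof.
  intros Hr Hfg Hg eps Heps. destruct (Hg eps Heps) as [d Hd].
  assert (Hm : 0 < Rmin d r) by (apply Rmin_pos; [apply cond_pos|auto]).
  exists (mkposreal _ Hm). intros h Hh Hh2. simpl in Hh2.
  rewrite (Hfg (x + h)), (Hfg x).
  - apply Hd; auto. apply Rlt_le_trans with (1 := Hh2). apply Rmin_l.
  - replace (x - x) with 0 by ring. rewrite Rabs_R0. auto.
  - replace (x + h - x) with h by ring. apply Rlt_le_trans with (1 := Hh2). apply Rmin_r.
Qed.

Lemma sgn_pos t : 0 < t -> sgn t = 1.
Proof. unfold sgn. destruct (Rlt_dec 0 t); auto; lra. Qed.
Lemma sgn_neg t : t < 0 -> sgn t = -1.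
Proof. unfold sgn. destruct (Rlt_dec 0 t); [lra|]. destruct (Rlt_dec t 0); auto; lra. Qed.
Lemma sgn_0 : sgn 0 = 0.
Proof. unfold sgn. destruct (Rlt_dec 0 0); [lra|]. destruct (Rlt_dec 0 0); auto; lra. Qed.

Lemma Rpower_lt_base a b c : 0 < c -> 0 <= a -> a < b -> abspow a c < abspow b c.
Proof. intros Hc Ha Hab. destruct (Req_dec a 0) as [->|E].
  rewrite abspow_0. apply abspow_pos. lra.
  rewrite !abspow_nz by lra. rewrite !Rabs_right by lra. apply Rlt_Rpower_l; lra. Qed.

Lemma deriv_abspow p t : 1 < p ->
  derivable_pt_lim (fun s => abspow s p) t (p * sgn t * abspow t (p - 1)).
Proof.
  intros Hp. destruct (Rtotal_order t 0) as [Hlt|[Heq|Hgt]].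
  - rewrite sgn_neg, abspow_nz, Rabs_left by lra.
    apply dpl_loc with (g := comp (fun u => Rpower u p) (fun s => - s)) (r := - t). lra.
    + intros z Hz. unfold comp. assert (z < 0). { apply Rabs_def2 in Hz. lra. }
      rewrite abspow_nz, Rabs_left by lra. auto.
    + replace (p * -1 * Rpower (- t) (p - 1)) with ((p * Rpower (- t) (p - 1)) * (-1)) by ring.
      apply derivable_pt_lim_comp.
      * apply (derivable_pt_lim_opp id). apply derivable_pt_lim_id.
      * apply derivable_pt_lim_power. lra.
  - subst t. rewrite sgn_0. replace (p * 0 * abspow 0 (p - 1)) with 0 by ring.
    intros eps Heps.
    assert (Hd : 0 < Rpower eps (/ (p - 1))) by apply Rpower_pos.
    exists (mkposreal _ Hd). intros h Hh Hh2. simpl in Hh2.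
    rewrite Rplus_0_l, abspow_0, Rminus_0_r, Rminus_0_r.
    rewrite abspow_nz by auto.
    assert (Hah : 0 < Rabs h) by (apply Rabs_pos_lt; auto).
    replace (Rpower (Rabs h) p / h) with (Rpower (Rabs h) (p - 1) * (Rabs h / h)).
    2:{ replace p with ((p - 1) + 1) at 2 by ring. rewrite Rpower_plus, Rpower_1 by auto. field. auto. }
    rewrite Rabs_mult. assert (Rabs (Rabs h / h) = 1).
    { unfold Rdiv. rewrite Rabs_mult, Rabs_Rabsolu, Rabs_inv. field. lra. }
    rewrite H, Rmult_1_r. rewrite Rabs_right by (left; apply Rpower_pos).
    replace eps with (Rpower (Rpower eps (/ (p - 1))) (p - 1)).
    + apply Rlt_Rpower_l; lra.
    + rewrite Rpower_mult. replace (/ (p - 1) * (p - 1)) with 1 by (field; lra). apply Rpower_1; auto.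
  - rewrite sgn_pos, abspow_nz, Rabs_right by lra.
    apply dpl_loc with (g := fun u => Rpower u p) (r := t). lra.
    + intros z Hz. assert (0 < z). { apply Rabs_def2 in Hz. lra. }
      rewrite abspow_nz, Rabs_right by lra. auto.
    + replace (p * 1 * Rpower t (p - 1)) with (p * Rpower t (p - 1)) by ring.
      apply derivable_pt_lim_power. lra.
Qed.

Definition dphi (p t : R) := p * sgn t * abspow t (p - 1).

Lemma abspow_opp t a : abspow (- t) a = abspow t a.
Proof. destruct (Req_dec t 0) as [->|E]. rewrite Ropp_0; auto.
  rewrite !abspow_nz by lra. rewrite Rabs_Ropp; auto. Qed.

Lemma dphi_strict p s t : 1 < p -> s < t -> dphi p s < dphi p t.
Proof. intros Hp Hst. unfold dphi.
  destruct (Rtotal_order s 0) as [Hs|[Hs|Hs]].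
  - rewrite sgn_neg by auto.
    destruct (Rtotal_order t 0) as [Ht|[Ht|Ht]].
    + rewrite sgn_neg by auto. rewrite <- (abspow_opp s), <- (abspow_opp t).
      assert (abspow (-t) (p-1) < abspow (-s) (p-1)) by (apply Rpower_lt_base; lra).
      nra.
    + subst. rewrite sgn_0. assert (0 < abspow s (p-1)) by (apply abspow_pos; lra). nra.
    + rewrite sgn_pos by auto. assert (0 < abspow s (p-1)) by (apply abspow_pos; lra).
      assert (0 < abspow t (p-1)) by (apply abspow_pos; lra). nra.
  - subst. rewrite sgn_0, sgn_pos by auto. assert (0 < abspow t (p-1)) by (apply abspow_pos; lra). nra.
  - rewrite !sgn_pos by lra. assert (abspow s (p-1) < abspow t (p-1)) by (apply Rpower_lt_base; lra). nra.
Qed.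

Lemma tangent_strict p u v : 1 < p -> u <> v ->
  abspow u p + dphi p u * (v - u) < abspow v p.
Proof. intros Hp Huv.
  assert (D : forall c, derivable_pt_lim (fun s => abspow s p) c (dphi p c)) by (intros; apply deriv_abspow; auto).
  destruct (Rtotal_order u v) as [H|[H|H]]; [|congruence|].
  - destruct (MVT_cor2 (fun s => abspow s p) (dphi p) u v H) as [c [Hc1 Hc2]]. intros; apply D.
    assert (dphi p u < dphi p c) by (apply dphi_strict; lra). nra.
  - destruct (MVT_cor2 (fun s => abspow s p) (dphi p) v u H) as [c [Hc1 Hc2]]. intros; apply D.
    assert (dphi p c < dphi p u) by (apply dphi_strict; lra). nra.
Qed.

Lemma tangent_le p u v : 1 < p -> abspow u p + dphi p u * (v - u) <= abspow v p.
Proof. intros Hp. destruct (Req_dec u v) as [->|E]. lra. left; apply tangent_strict; auto. Qed.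

Lemma mid_convex p a b : 1 < p -> abspow ((a + b) / 2) p <= (abspow a p + abspow b p) / 2.
Proof. intros Hp. assert (H1 := tangent_le p ((a+b)/2) a Hp). assert (H2 := tangent_le p ((a+b)/2) b Hp). lra. Qed.

Lemma mid_strict p a b : 1 < p -> a <> b -> abspow ((a + b) / 2) p < (abspow a p + abspow b p) / 2.
Proof. intros Hp E. assert (H1 := tangent_strict p ((a+b)/2) a Hp). assert (H2 := tangent_strict p ((a+b)/2) b Hp).
  assert ((a+b)/2 <> a) by lra. assert ((a+b)/2 <> b) by lra. specialize (H1 H). specialize (H2 H0). lra. Qed.

Lemma fpow_nonneg p N x : 0 <= fpow p N x.
Proof. unfold fpow. apply rsum_nonneg. intros; apply abspow_nonneg. Qed.

Lemma Rpower_inv_p p x : 1 < p -> 0 < x -> Rpower (Rpower x p) (1 / p) = x.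
Proof. intros. rewrite Rpower_mult. replace (p * (1 / p)) with 1 by (field; lra). apply Rpower_1; auto. Qed.
Lemma Rpower_inv_p' p x : 1 < p -> 0 < x -> Rpower (Rpower x (1/p)) p = x.
Proof. intros. rewrite Rpower_mult. replace (1/p * p) with 1 by (field; lra). apply Rpower_1; auto. Qed.

Lemma pnorm_le_iff p N x eta : 1 < p -> 0 < eta ->
  (pnorm p N x <= eta <-> fpow p N x <= Rpower eta p).
Proof. intros Hp He. unfold pnorm. fold (fpow p N x).
  assert (H0 := fpow_nonneg p N x). set (F := fpow p N x) in *.
  assert (Hq : 0 < Rpower eta p) by apply Rpower_pos.
  destruct (Req_dec F 0) as [E|E].
  - rewrite E, abspow_0. split; intros; try lra.
  - assert (HF : 0 < F) by (destruct H0; auto; congruence). rewrite abspow_nz, Rabs_right by lra. split; intros H.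
    + rewrite <- (Rpower_inv_p' p F) by lra. apply Rle_Rpower_l. lra. split; [apply Rpower_pos|]. auto.
    + rewrite <- (Rpower_inv_p p eta) by lra. apply Rle_Rpower_l. left; apply Rdiv_lt_0_compat; lra. split; [exact HF|]. auto.
Qed.

Lemma pnorm_eq p N x eta : 1 < p -> 0 < eta -> fpow p N x = Rpower eta p -> pnorm p N x = eta.
Proof. intros Hp He H. unfold pnorm. fold (fpow p N x). rewrite H.
  rewrite abspow_nz. rewrite Rabs_right. apply Rpower_inv_p; auto. left; apply Rpower_pos.
  apply Rgt_not_eq, Rpower_pos. Qed.

Lemma coord_bound p N x eta j : 1 < p -> 0 < eta -> fpow p N x <= Rpower eta p -> (j < N)%nat -> Rabs (x j) <= eta.
Proof. intros Hp He H Hj. assert (abspow (x j) p <= Rpower eta p).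
  { eapply Rle_trans; [|exact H]. unfold fpow. apply (rsum_term_le N (fun i => abspow (x i) p)); auto. intros; apply abspow_nonneg. }
  destruct (Req_dec (x j) 0) as [E|E]. rewrite E, Rabs_R0; lra.
  rewrite abspow_nz in H0 by auto. destruct (Rle_dec (Rabs (x j)) eta) as [|N1]; auto.
  exfalso. assert (Rpower eta p < Rpower (Rabs (x j)) p) by (apply Rlt_Rpower_l; lra). lra. Qed.

Lemma fpow_zero p N : fpow p N (fun _ => 0) = 0.
Proof. unfold fpow. rewrite (rsum_ext _ _ (fun _ => 0)). apply rsum_zero. intros; apply abspow_0. Qed.

Lemma deriv_term p a b : 1 < p -> derivable_pt_lim (fun s => abspow (a + s * b) p) 0 (dphi p a * b).
Proof. intros Hp. assert (H := derivable_pt_lim_comp (fun s => a + s * b) (fun t => abspow t p) 0 b (dphi p a)).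
  apply H.
  - intros eps Heps. exists (mkposreal _ Heps). intros h Hh _. 
    replace ((a + (0 + h) * b - (a + 0 * b)) / h - b) with 0 by (field; auto). rewrite Rabs_R0; auto.
  - replace (a + 0 * b) with a by ring. apply deriv_abspow; auto.
Qed.

Lemma deriv_fpow p N x d : 1 < p ->
  derivable_pt_lim (fun s => fpow p N (fun j => x j + s * d j)) 0 (rsum N (fun j => dphi p (x j) * d j)).
Proof. intros Hp. induction N; simpl.
  - unfold fpow; simpl. apply derivable_pt_lim_const.
  - apply (derivable_pt_lim_plus (fun s => fpow p N (fun j => x j + s * d j)) (fun s => abspow (x N + s * d N) p)); auto.
    apply deriv_term; auto.
Qed.

Definition Gf m N A y x := rsum m (fun i => resid m N A y x i * resid m N A y x i).
Definition axpy (x : nat -> R) s (d : nat -> R) := fun j => x j + s * d j.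

Lemma rsum_lin2 n a b F G : rsum n (fun j => a * F j + b * G j) = a * rsum n F + b * rsum n G.
Proof. rewrite rsum_plus, !rsum_scal. auto. Qed.

Lemma Gf_nonneg m N A y x : 0 <= Gf m N A y x.
Proof. apply rsum_nonneg. intros; nra. Qed.

Lemma resid_axpy m N A y x s d i : resid m N A y (axpy x s d) i = resid m N A y x i + s * matvec N A d i.
Proof. unfold resid, matvec, axpy. rewrite <- rsum_scal.
  rewrite (rsum_ext N (fun j => A i j * (x j + s * d j)) (fun j => A i j * x j + s * (A i j * d j))) by (intros; ring).
  rewrite rsum_plus. ring. Qed.

Lemma dot_swap m N A r d : rsum m (fun i => r i * matvec N A d i) = rsum N (fun j => tmatvec m A r j * d j).
Proof. unfold matvec, tmatvec.
  rewrite (rsum_ext m _ (fun i => rsum N (fun j => r i * (A i j * d j)))) by (intros; rewrite <- rsum_scal; auto).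
  rewrite rsum_swap. apply rsum_ext. intros j _. rewrite (Rmult_comm _ (d j)), <- rsum_scal. apply rsum_ext. intros; ring. Qed.

Lemma Gf_axpy m N A y x s d : Gf m N A y (axpy x s d) =
  Gf m N A y x + 2 * s * rsum N (fun j => tmatvec m A (resid m N A y x) j * d j)
   + s * s * rsum m (fun i => matvec N A d i * matvec N A d i).
Proof. rewrite <- dot_swap. unfold Gf.
  rewrite (rsum_ext m _ (fun i => (resid m N A y x i * resid m N A y x i + (2*s) * (resid m N A y x i * matvec N A d i)) + (s*s) * (matvec N A d i * matvec N A d i))).
  2:{ intros. rewrite resid_axpy. ring. }
  rewrite !rsum_plus, !rsum_scal. ring. Qed.

Lemma opt_G p m N A y eta xs z : 1 < p -> 0 < eta -> optimal p m N A y eta xs ->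
  fpow p N z <= Rpower eta p -> Gf m N A y xs <= Gf m N A y z.
Proof. intros Hp He [_ H] Hz. apply sqrt_le_0; try apply Gf_nonneg. apply H. apply pnorm_le_iff; auto. Qed.

Lemma first_order p m N A y eta xs d : 1 < p -> 0 < eta -> optimal p m N A y eta xs ->
  (exists delta, 0 < delta /\ forall s, 0 < s < delta -> fpow p N (axpy xs s d) <= Rpower eta p) ->
  0 <= rsum N (fun j => tmatvec m A (resid m N A y xs) j * d j).
Proof. intros Hp He Hopt [delta [Hd Hs]].
  set (a := rsum N _). set (Q := rsum m (fun i => matvec N A d i * matvec N A d i)).
  assert (HQ : 0 <= Q) by (apply rsum_nonneg; intros; nra).
  destruct (Rle_dec 0 a) as [|Ha]; auto. exfalso.
  set (s := Rmin (delta / 2) (- a / (Q + 1))).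
  assert (Hs1 : 0 < s) by (apply Rmin_pos; [lra| apply Rdiv_lt_0_compat; lra]).
  assert (Hs2 : s <= delta / 2) by apply Rmin_l.
  assert (Hs3 : s <= - a / (Q + 1)) by apply Rmin_r.
  assert (H := opt_G p m N A y eta xs (axpy xs s d) Hp He Hopt (Hs s ltac:(lra))).
  rewrite Gf_axpy in H. fold a Q in H.
  assert (s * (Q + 1) <= - a) by (apply (Rmult_le_compat_r (Q+1)) in Hs3; [|lra]; unfold Rdiv in Hs3; rewrite Rmult_assoc, Rinv_l, Rmult_1_r in Hs3; lra).
  nra.
Qed.

Lemma axpy_0 x d : forall j, axpy x 0 d j = x j.
Proof. intros; unfold axpy; ring. Qed.

Lemma fpow_axpy0 p N x d : fpow p N (axpy x 0 d) = fpow p N x.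
Proof. unfold fpow. apply rsum_ext. intros; rewrite axpy_0; auto. Qed.

Lemma feasible_interior p N x d bnd : 1 < p -> fpow p N x < bnd ->
  exists delta, 0 < delta /\ forall s, 0 < s < delta -> fpow p N (axpy x s d) <= bnd.
Proof. intros Hp Hx. set (D := rsum N (fun j => dphi p (x j) * d j)).
  destruct (deriv_fpow p N x d Hp 1 Rlt_0_1) as [dl Hdl].
  set (e := Rmin dl ((bnd - fpow p N x) / (Rabs D + 1))).
  assert (Hr : 0 < Rabs D + 1) by (assert (0 <= Rabs D) by apply Rabs_pos; lra).
  assert (He : 0 < e) by (apply Rmin_pos; [apply cond_pos| apply Rdiv_lt_0_compat; lra]).
  exists e. split; auto. intros s [Hs1 Hs2].
  assert (Hsd : Rabs s < dl) by (rewrite Rabs_right by lra; apply Rlt_le_trans with e; [lra|apply Rmin_l]).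
  specialize (Hdl s ltac:(lra) Hsd). rewrite Rplus_0_l in Hdl. fold D in Hdl.
  change (fpow p N (fun j => x j + s * d j)) with (fpow p N (axpy x s d)) in Hdl.
  change (fpow p N (fun j => x j + 0 * d j)) with (fpow p N (axpy x 0 d)) in Hdl. rewrite fpow_axpy0 in Hdl.
  set (F := fpow p N (axpy x s d)) in *.
  assert (Hq : (F - fpow p N x) / s < D + 1) by (apply Rabs_def2 in Hdl; destruct Hdl; lra).
  assert (HD : D <= Rabs D) by apply Rle_abs.
  assert (F - fpow p N x < s * (Rabs D + 1)).
  { apply (Rmult_lt_compat_l s) in Hq; [|lra]. unfold Rdiv in Hq. rewrite <- Rmult_assoc, (Rmult_comm s), Rmult_assoc, Rinv_r, Rmult_1_r in Hq by lra. nra. }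
  assert (s <= (bnd - fpow p N x) / (Rabs D + 1)) by (apply Rle_trans with e; [lra|apply Rmin_r]).
  apply (Rmult_le_compat_r (Rabs D + 1)) in H0; [|lra]. unfold Rdiv in H0. rewrite Rmult_assoc, Rinv_l, Rmult_1_r in H0 by lra. lra.
Qed.

Lemma feasible_descent p N x d : 1 < p -> rsum N (fun j => dphi p (x j) * d j) < 0 ->
  exists delta, 0 < delta /\ forall s, 0 < s < delta -> fpow p N (axpy x s d) < fpow p N x.
Proof. intros Hp HD. set (D := rsum N (fun j => dphi p (x j) * d j)) in *.
  destruct (deriv_fpow p N x d Hp (- D / 2) ltac:(lra)) as [dl Hdl].
  exists dl. split; [apply cond_pos|]. intros s [Hs1 Hs2].
  assert (Hsd : Rabs s < dl) by (rewrite Rabs_right by lra; lra).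
  specialize (Hdl s ltac:(lra) Hsd). rewrite Rplus_0_l in Hdl. fold D in Hdl.
  change (fpow p N (fun j => x j + s * d j)) with (fpow p N (axpy x s d)) in Hdl.
  change (fpow p N (fun j => x j + 0 * d j)) with (fpow p N (axpy x 0 d)) in Hdl. rewrite fpow_axpy0 in Hdl.
  set (F := fpow p N (axpy x s d)) in *.
  assert (Hq : (F - fpow p N x) / s < D / 2) by (apply Rabs_def2 in Hdl; destruct Hdl; lra).
  apply (Rmult_lt_compat_l s) in Hq; [|lra]. unfold Rdiv in Hq. rewrite <- Rmult_assoc, (Rmult_comm s), Rmult_assoc, Rinv_r, Rmult_1_r in Hq by lra. nra.
Qed.

Lemma r_nonzero p m N A y eta xs : 1 < p -> 0 < eta -> optimal p m N A y eta xs ->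
  below_min_norm p m N A y eta -> exists i, (i < m)%nat /\ resid m N A y xs i <> 0.
Proof. intros Hp He Hopt [x0 [Hs0 [Hmin Hlt]]]. apply NNPP. intros Hn.
  assert (Hsol : solves m N A y xs).
  { intros i Hi. apply NNPP. intros E. apply Hn. exists i. split; auto. unfold resid. intros E2. apply E. lra. }
  assert (H1 := Hmin xs Hsol). destruct Hopt as [H2 _]. lra. Qed.

Lemma boundary p m N A y eta xs : 1 < p -> 0 < eta -> optimal p m N A y eta xs ->
  below_min_norm p m N A y eta -> full_row_rank m N A -> fpow p N xs = Rpower eta p.
Proof. intros Hp He Hopt Hbm FR.
  assert (Hle : fpow p N xs <= Rpower eta p) by (apply pnorm_le_iff; auto; apply Hopt).
  destruct Hle as [Hlt|]; auto. exfalso.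
  set (c := tmatvec m A (resid m N A y xs)).
  destruct (feasible_interior p N xs (fun j => - c j) (Rpower eta p) Hp Hlt) as [d Hd].
  assert (H := first_order p m N A y eta xs (fun j => - c j) Hp He Hopt (ex_intro _ d Hd)).
  fold c in H.
  rewrite (rsum_ext N _ (fun j => (-1) * (c j * c j))) in H by (intros; ring).
  rewrite rsum_scal in H.
  assert (Hc : forall j, (j < N)%nat -> c j = 0) by (apply rsum_sq_zero; lra).
  destruct (r_nonzero p m N A y eta xs Hp He Hopt Hbm) as [i [Hi Hri]].
  apply Hri. apply (FR (resid m N A y xs) Hc i Hi).
Qed.

Lemma dphi_nz p t : 1 < p -> t <> 0 -> dphi p t <> 0.
Proof. intros Hp Ht. unfold dphi. assert (Ha : 0 < abspow t (p - 1)) by (apply abspow_pos; auto).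
  destruct (Rtotal_order t 0) as [Hl|[Hl|Hl]]; [rewrite sgn_neg by auto|congruence|rewrite sgn_pos by auto]; nra. Qed.

Lemma kkt_exists p m N A y eta xs : 1 < p -> 0 < eta -> optimal p m N A y eta xs ->
  below_min_norm p m N A y eta -> full_row_rank m N A ->
  exists mu, 0 < mu /\ forall j, (j < N)%nat ->
    tmatvec m A (resid m N A y xs) j + mu * dphi p (xs j) = 0.
Proof. intros Hp He Hopt Hbm FR.
  assert (Hb := boundary p m N A y eta xs Hp He Hopt Hbm FR).
  set (c := tmatvec m A (resid m N A y xs)).
  set (g := fun j => dphi p (xs j)).
  assert (Hdesc : forall d, rsum N (fun j => g j * d j) < 0 -> 0 <= rsum N (fun j => c j * d j)).
  { intros d Hd. destruct (feasible_descent p N xs d Hp Hd) as [de [Hde Hs]].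
    apply (first_order p m N A y eta xs d Hp He Hopt). exists de. split; auto. intros s Hs'. left. rewrite <- Hb. apply Hs; auto. }
  assert (HG2 : 0 < rsum N (fun j => g j * g j)).
  { assert (exists j, (j < N)%nat /\ xs j <> 0).
    { apply NNPP. intros Hn. assert (fpow p N xs = 0).
      { unfold fpow. rewrite <- (rsum_zero N). apply rsum_ext. intros j Hj.
        destruct (Req_dec (xs j) 0) as [E|E]. rewrite E; apply abspow_0. exfalso; apply Hn; exists j; auto. }
      assert (0 < Rpower eta p) by apply Rpower_pos. lra. }
    destruct H as [j [Hj Hx]]. rewrite <- (rsum_zero N). apply rsum_lt. intros; nra.
    exists j. split; auto. assert (g j <> 0) by (apply dphi_nz; auto). assert (0 < g j * g j) by (apply Rsqr_pos_lt in H; exact H). lra. }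
  set (G2 := rsum N (fun j => g j * g j)) in *.
  set (cg := rsum N (fun j => c j * g j)).
  set (al := cg / G2).
  set (w := fun j => c j - al * g j).
  set (W := rsum N (fun j => w j * w j)).
  assert (Hgw : rsum N (fun j => g j * w j) = 0).
  { unfold w. rewrite (rsum_ext N _ (fun j => 1 * (c j * g j) + (- al) * (g j * g j))) by (intros; ring).
    rewrite rsum_lin2. fold cg G2. unfold al. field. lra. }
  assert (Hcw : rsum N (fun j => c j * w j) = W).
  { unfold W. rewrite (rsum_ext N (fun j => c j * w j) (fun j => 1 * (w j * w j) + al * (g j * w j))) by (intros; unfold w; ring).
    rewrite rsum_lin2, Hgw. ring. }
  assert (Ht : forall t, 0 <= - cg - t * W).
  { intros t. assert (H := Hdesc (fun j => - g j - t * w j)).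
    rewrite (rsum_ext N _ (fun j => (-1) * (g j * g j) + (- t) * (g j * w j))) in H by (intros; ring).
    rewrite (rsum_ext N (fun j => c j * (- g j - t * w j)) (fun j => (-1) * (c j * g j) + (- t) * (c j * w j))) in H by (intros; ring).
    rewrite !rsum_lin2, Hgw, Hcw in H. fold G2 cg in H. assert (H0 : -1 * G2 + - t * 0 < 0) by lra. specialize (H H0). lra. }
  assert (HW : W <= 0).
  { destruct (Rle_dec W 0) as [|HW]; auto. exfalso. specialize (Ht ((1 - cg) / W)).
    replace (- cg - (1 - cg) / W * W) with (-1) in Ht by (field; lra). lra. }
  assert (Hw0 : forall j, (j < N)%nat -> w j = 0) by (apply rsum_sq_zero; auto).
  assert (Hcg : cg <= 0) by (specialize (Ht 0); lra).
  assert (Hal : al < 0).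
  { unfold al. destruct (Req_dec cg 0) as [E|E].
    - exfalso. assert (Hc : forall j, (j < N)%nat -> c j = 0).
      { intros j Hj. specialize (Hw0 j Hj). unfold w, al in Hw0. rewrite E in Hw0. unfold Rdiv in Hw0. lra. }
      destruct (r_nonzero p m N A y eta xs Hp He Hopt Hbm) as [i [Hi Hri]].
      apply Hri. apply (FR (resid m N A y xs) Hc i Hi).
    - unfold Rdiv. assert (0 < / G2) by (apply Rinv_0_lt_compat; auto). nra. }
  exists (- al). split. lra. intros j Hj. specialize (Hw0 j Hj). unfold w in Hw0. fold c. fold (g j). lra.
Qed.

Lemma incr_ge (psi : nat -> nat) : (forall n, (psi n < psi (S n))%nat) -> forall n, (n <= psi n)%nat.
Proof. intros H n. induction n. lia. specialize (H n). lia. Qed.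

Lemma incr_mono (psi : nat -> nat) : (forall n, (psi n < psi (S n))%nat) -> forall n k, (n <= k)%nat -> (psi n <= psi k)%nat.
Proof. intros H n k Hnk. induction Hnk. lia. specialize (H m). lia. Qed.

Lemma sub_cv u l psi : Un_cv u l -> (forall n, (psi n < psi (S n))%nat) -> Un_cv (fun n => u (psi n)) l.
Proof. intros Hu Hp eps He. destruct (Hu eps He) as [N0 HN]. exists N0. intros n Hn. apply HN.
  assert (H := incr_ge psi Hp n). lia. Qed.

Lemma cluster_sub u l : ValAdh u l -> exists psi, (forall n, (psi n < psi (S n))%nat) /\ Un_cv (fun n => u (psi n)) l.
Proof. intros Hv.
  assert (Hp : forall N0 k : nat, exists n, (N0 <= n)%nat /\ Rabs (u n - l) < / (INR k + 1)).
  { intros N0 k. assert (Hk : 0 < / (INR k + 1)) by (apply Rinv_0_lt_compat; assert (0 <= INR k) by apply pos_INR; lra).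
    destruct (Hv (disc l (mkposreal _ Hk)) N0) as [n [Hn Hd]].
    - exists (mkposreal _ Hk). intros z Hz; auto.
    - exists n. split; auto. }
  set (pick := fun N0 k => proj1_sig (constructive_indefinite_description _ (Hp N0 k))).
  assert (Hpick : forall N0 k, (N0 <= pick N0 k)%nat /\ Rabs (u (pick N0 k) - l) < / (INR k + 1)).
  { intros. unfold pick. destruct (constructive_indefinite_description _ (Hp N0 k)); simpl; auto. }
  set (psi := fix f (k : nat) : nat := match k with O => pick O O | S k' => pick (S (f k')) (S k') end).
  assert (Hps : forall k, Rabs (u (psi k) - l) < / (INR k + 1)).
  { intros [|k]; simpl; apply Hpick. }
  exists psi. split.
  - intros n. simpl. destruct (Hpick (S (psi n)) (S n)). lia.
  - intros eps He. destruct (archimed (/ eps)) as [Ha _].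
    assert (Hz : (0 <= up (/ eps))%Z). { apply le_IZR. assert (0 < / eps) by (apply Rinv_0_lt_compat; auto). lra. }
    exists (Z.to_nat (up (/ eps))). intros n Hn. unfold R_dist. eapply Rlt_trans. apply Hps.
    assert (HI : IZR (up (/ eps)) <= INR n).
    { rewrite <- (Z2Nat.id (up (/eps))) by auto. rewrite <- INR_IZR_INZ. apply le_INR. lia. }
    assert (0 < / eps) by (apply Rinv_0_lt_compat; auto).
    rewrite <- (Rinv_inv eps). apply Rinv_lt_contravar. nra. lra.
Qed.

Lemma extract (X : nat -> nat -> R) (M : R) K :
  (forall n j, (j < K)%nat -> Rabs (X n j) <= M) ->
  exists phi : nat -> nat, (forall n, (phi n < phi (S n))%nat) /\
    exists l : nat -> R, forall j, (j < K)%nat -> Un_cv (fun n => X (phi n) j) (l j).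
Proof. induction K; intros HB.
  - exists (fun n => n). split. intros; lia. exists (fun _ => 0). intros; lia.
  - destruct IHK as [phi [Hphi [l Hl]]]. intros; apply HB; lia.
    destruct (Bolzano_Weierstrass (fun n => X (phi n) K) (fun c => - M <= c <= M) (compact_P3 (- M) M)) as [lk Hlk].
    { intros n. assert (H := HB (phi n) K (Nat.lt_succ_diag_r K)). unfold Rabs in H; destruct (Rcase_abs (X (phi n) K)); split; lra. }
    destruct (cluster_sub _ _ Hlk) as [psi [Hpsi Hcv]].
    exists (fun n => phi (psi n)). split.
    + intros n. assert (H1 := incr_mono phi Hphi (S (psi n)) (psi (S n)) (Hpsi n)). specialize (Hphi (psi n)). lia.
    + exists (fun j => if Nat.eqb j K then lk else l j). intros j Hj.
      destruct (Nat.eqb_spec j K) as [->|E]; auto.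
      apply (sub_cv (fun n => X (phi n) j)); auto. apply Hl. lia.
Qed.

Lemma cv_const c : Un_cv (fun _ => c) c.
Proof. intros eps He. exists O. intros. unfold R_dist. replace (c - c) with 0 by ring. rewrite Rabs_R0; auto. Qed.

Lemma rsum_cv K (F : nat -> nat -> R) L : (forall j, (j < K)%nat -> Un_cv (fun n => F n j) (L j)) ->
  Un_cv (fun n => rsum K (F n)) (rsum K L).
Proof. induction K; intros H; simpl. apply cv_const.
  apply CV_plus. apply IHK; intros; apply H; lia. apply H; lia. Qed.

Lemma cv_le u l b : Un_cv u l -> (forall n, u n <= b) -> l <= b.
Proof. intros Hu Hb. destruct (Rle_dec l b) as [|Hn]; auto. exfalso.
  destruct (Hu (l - b) ltac:(lra)) as [N0 HN]. specialize (HN N0 (le_n _)). specialize (Hb N0).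
  unfold R_dist in HN. apply Rabs_def2 in HN. lra. Qed.

Lemma abspow_cont p t : 1 < p -> continuity_pt (fun s => abspow s p) t.
Proof. intros Hp. apply derivable_continuous_pt. exists (dphi p t). apply deriv_abspow; auto. Qed.

Lemma exists_opt p m N A y eta : 1 < p -> 0 < eta -> exists xs, optimal p m N A y eta xs.
Proof. intros Hp He.
  set (B := Rpower eta p).
  set (E := fun v => exists x, fpow p N x <= B /\ v = - Gf m N A y x).
  assert (HbE : bound E). { exists 0. intros v [x [_ ->]]. assert (H := Gf_nonneg m N A y x). lra. }
  assert (HnE : exists v, E v). { exists (- Gf m N A y (fun _ => 0)). exists (fun _ => 0). split; auto. rewrite fpow_zero. left; apply Rpower_pos. }
  destruct (completeness E HbE HnE) as [L [HLu HLl]].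
  set (gi := - L).
  assert (Hgi : forall x, fpow p N x <= B -> gi <= Gf m N A y x).
  { intros x Hx. assert (E (- Gf m N A y x)) by (exists x; auto). apply HLu in H. unfold gi. lra. }
  assert (Hseq : forall n : nat, exists x, fpow p N x <= B /\ Gf m N A y x < gi + / (INR n + 1)).
  { intros n. assert (Hk : 0 < / (INR n + 1)) by (apply Rinv_0_lt_compat; assert (0 <= INR n) by apply pos_INR; lra).
    apply NNPP. intros Hn. assert (is_upper_bound E (L - / (INR n + 1))).
    { intros v [x [Hx ->]]. destruct (Rle_dec (- Gf m N A y x) (L - / (INR n + 1))) as [|Hc]; auto.
      exfalso. apply Hn. exists x. split; auto. unfold gi. lra. }
    apply HLl in H. lra. }
  set (X := fun n => proj1_sig (constructive_indefinite_description _ (Hseq n))).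
  assert (HX : forall n, fpow p N (X n) <= B /\ Gf m N A y (X n) < gi + / (INR n + 1)).
  { intros n. unfold X. destruct (constructive_indefinite_description _ (Hseq n)); simpl; auto. }
  destruct (extract X eta N) as [phi [Hphi [l Hl]]].
  { intros n j Hj. apply (coord_bound p N (X n) eta j Hp He (proj1 (HX n)) Hj). }
  assert (Hf : Un_cv (fun n => fpow p N (X (phi n))) (fpow p N l)).
  { unfold fpow. apply (rsum_cv N (fun n j => abspow (X (phi n) j) p)). intros j Hj.
    apply (continuity_seq (fun s => abspow s p)). apply abspow_cont; auto. apply Hl; auto. }
  assert (Hr : forall i, Un_cv (fun n => resid m N A y (X (phi n)) i) (resid m N A y l i)).
  { intros i. unfold resid. apply CV_plus; [|apply cv_const]. unfold matvec.
    apply (rsum_cv N (fun n j => A i j * X (phi n) j)). intros j Hj. apply CV_mult. apply cv_const. apply Hl; auto. }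
  assert (HG : Un_cv (fun n => Gf m N A y (X (phi n))) (Gf m N A y l)).
  { unfold Gf. apply (rsum_cv m (fun n i => resid m N A y (X (phi n)) i * resid m N A y (X (phi n)) i)). intros; apply CV_mult; apply Hr. }
  assert (HG2 : Un_cv (fun n => Gf m N A y (X (phi n))) gi).
  { intros eps Heps. destruct (archimed (/ eps)) as [Ha _].
    assert (Hz : (0 <= up (/ eps))%Z). { apply le_IZR. assert (0 < / eps) by (apply Rinv_0_lt_compat; auto). lra. }
    exists (Z.to_nat (up (/ eps))). intros n Hn. unfold R_dist.
    assert (H1 := proj2 (HX (phi n))). assert (H2 := Hgi _ (proj1 (HX (phi n)))).
    assert (HI : IZR (up (/ eps)) <= INR n).
    { rewrite <- (Z2Nat.id (up (/eps))) by auto. rewrite <- INR_IZR_INZ. apply le_INR. lia. }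
    assert (HI2 : INR n <= INR (phi n)) by (apply le_INR; apply incr_ge; auto).
    assert (0 < / eps) by (apply Rinv_0_lt_compat; auto).
    assert (/ (INR (phi n) + 1) < eps).
    { rewrite <- (Rinv_inv eps). apply Rinv_lt_contravar. nra. lra. }
    rewrite Rabs_right by lra. lra. }
  assert (HGl : Gf m N A y l = gi) by (eapply UL_sequence; eauto).
  assert (Hfl : fpow p N l <= B) by (apply (cv_le _ _ _ Hf); intros; apply HX).
  exists l. split. apply pnorm_le_iff; auto.
  intros z Hz. apply pnorm_le_iff in Hz; auto. apply sqrt_le_1_alt. fold (Gf m N A y l). fold (Gf m N A y z).
  rewrite HGl. apply Hgi; auto.
Qed.

Lemma resid_mid m N A y x1 x2 i :
  resid m N A y (fun j => (x1 j + x2 j) / 2) i = (resid m N A y x1 i + resid m N A y x2 i) / 2.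
Proof. unfold resid, matvec.
  rewrite (rsum_ext N _ (fun j => /2 * (A i j * x1 j) + /2 * (A i j * x2 j))) by (intros; field).
  rewrite rsum_lin2. field. Qed.

Lemma mid_sq a b : (a+b)/2*((a+b)/2) <= /2*(a*a) + /2*(b*b).
Proof. assert (0 <= (a-b)*(a-b)) by apply Rle_0_sqr.
  replace (/2*(a*a) + /2*(b*b)) with ((a+b)/2*((a+b)/2) + /4*((a-b)*(a-b))) by field. assert (0 <= /4 * ((a-b)*(a-b))) by (apply Rmult_le_pos; [left; apply Rinv_0_lt_compat; lra|auto]). lra. Qed.

Lemma opt_unique p m N A y eta x1 x2 : 1 < p -> 0 < eta -> below_min_norm p m N A y eta -> full_row_rank m N A ->
  optimal p m N A y eta x1 -> optimal p m N A y eta x2 -> forall j, (j < N)%nat -> x2 j = x1 j.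
Proof. intros Hp He Hbm FR H1 H2.
  set (xm := fun j => (x1 j + x2 j) / 2).
  assert (F1 : fpow p N x1 <= Rpower eta p) by (apply pnorm_le_iff; auto; apply H1).
  assert (F2 : fpow p N x2 <= Rpower eta p) by (apply pnorm_le_iff; auto; apply H2).
  assert (Hmid : fpow p N xm <= (fpow p N x1 + fpow p N x2) / 2).
  { unfold fpow. replace ((rsum N (fun i => abspow (x1 i) p) + rsum N (fun i => abspow (x2 i) p)) / 2)
      with (rsum N (fun i => /2 * abspow (x1 i) p + /2 * abspow (x2 i) p)) by (rewrite rsum_lin2; field).
    apply rsum_le. intros i _. unfold xm. assert (H := mid_convex p (x1 i) (x2 i) Hp). lra. }
  assert (Fm : fpow p N xm <= Rpower eta p) by lra.
  assert (G12 : Gf m N A y x1 <= Gf m N A y x2) by (apply (opt_G p m N A y eta); auto).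
  assert (Gm : Gf m N A y xm <= (Gf m N A y x1 + Gf m N A y x2) / 2).
  { unfold Gf. rewrite (rsum_ext m (fun i => resid m N A y xm i * resid m N A y xm i)
       (fun i => (resid m N A y x1 i + resid m N A y x2 i) / 2 * ((resid m N A y x1 i + resid m N A y x2 i) / 2)))
      by (intros; unfold xm; rewrite resid_mid; auto).
    replace ((rsum m (fun i => resid m N A y x1 i * resid m N A y x1 i) + rsum m (fun i => resid m N A y x2 i * resid m N A y x2 i)) / 2)
      with (rsum m (fun i => /2 * (resid m N A y x1 i * resid m N A y x1 i) + /2 * (resid m N A y x2 i * resid m N A y x2 i))) by (rewrite rsum_lin2; field).
    apply rsum_le. intros; apply mid_sq. }
  assert (Hopt : optimal p m N A y eta xm).
  { split. apply pnorm_le_iff; auto. intros z Hz. apply sqrt_le_1_alt. fold (Gf m N A y xm). fold (Gf m N A y z).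
    apply pnorm_le_iff in Hz; auto. assert (H := opt_G p m N A y eta x1 z Hp He H1 Hz). assert (Gf m N A y x2 <= Gf m N A y x1) by (apply (opt_G p m N A y eta); auto). lra. }
  assert (Hb := boundary p m N A y eta xm Hp He Hopt Hbm FR).
  intros j Hj. apply NNPP. intros Hne.
  assert (fpow p N xm < (fpow p N x1 + fpow p N x2) / 2).
  { unfold fpow. replace ((rsum N (fun i => abspow (x1 i) p) + rsum N (fun i => abspow (x2 i) p)) / 2)
      with (rsum N (fun i => /2 * abspow (x1 i) p + /2 * abspow (x2 i) p)) by (rewrite rsum_lin2; field).
    apply rsum_lt. intros i _. unfold xm. assert (H := mid_convex p (x1 i) (x2 i) Hp). lra.
    exists j. split; auto. unfold xm. assert (H := mid_strict p (x1 j) (x2 j) Hp). assert (x1 j <> x2 j) by auto. specialize (H H0). lra. }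
  lra.
Qed.

Lemma rsum_delta n c j : (j < n)%nat -> rsum n (fun i => c i * (if Nat.eqb i j then 1 else 0)) = c j.
Proof. induction n; intros Hj; simpl; [lia|].
  destruct (Nat.eqb_spec n j) as [->|E].
  - rewrite (rsum_ext j _ (fun _ => 0)). rewrite rsum_zero; ring.
    intros i Hi. destruct (Nat.eqb_spec i j); [lia|ring].
  - rewrite IHn by lia. ring. Qed.

Lemma inv_kernel m M c : invertible m M -> (forall k, (k < m)%nat -> rsum m (fun i => M i k * c i) = 0) ->
  forall i, (i < m)%nat -> c i = 0.
Proof. intros [B [HB _]] Hk j Hj. rewrite <- (rsum_delta m c j Hj).
  rewrite (rsum_ext m _ (fun i => rsum m (fun k => c i * (M i k * B k j)))).
  2:{ intros i Hi. rewrite rsum_scal, HB; auto. }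
  rewrite rsum_swap. rewrite <- (rsum_zero m). apply rsum_ext. intros k Hk'.
  rewrite (rsum_ext m _ (fun i => B k j * (M i k * c i))) by (intros; ring).
  rewrite rsum_scal, Hk; auto. ring. Qed.

Lemma filter_sorted (P : nat -> bool) n a k l : (k < l)%nat -> (l < length (filter P (seq a n)))%nat ->
  (nth k (filter P (seq a n)) O < nth l (filter P (seq a n)) O)%nat.
Proof. revert a k l. induction n; intros a k l Hkl Hl; simpl in *; [lia|].
  destruct (P a) eqn:Pa.
  - simpl in Hl. destruct k as [|k]; destruct l as [|l]; try lia; simpl.
    + assert (Hin : In (nth l (filter P (seq (S a) n)) O) (filter P (seq (S a) n))) by (apply nth_In; lia).
      apply filter_In in Hin. destruct Hin as [Hin _]. apply in_seq in Hin. lia.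
    + apply IHn; lia.
  - apply IHn; lia. Qed.

Lemma filter_len2 (P : nat -> bool) l : (length (filter P l) + length (filter (fun i => negb (P i)) l) = length l)%nat.
Proof. induction l; simpl; auto. destruct (P a); simpl; lia. Qed.

Theorem part_ii (p : R) (m N : nat) (A : nat -> nat -> R) (y : nat -> R) (eta : R) :
  1 < p -> (m <= N)%nat -> all_square_submatrices_invertible m N A ->
    0 < eta -> below_min_norm p m N A y eta ->
    forall xs, optimal p m N A y eta xs -> (N - m + 1 <= supp_card N xs)%nat.
Proof. intros Hp HmN HA He Hbm xs Hopt.
  assert (FR : full_row_rank m N A).
  { intros c Hc. apply (inv_kernel m (fun i k => A i (k))).
    - apply (HA (fun k => k)); intros; lia.
    - intros k Hk. apply Hc. lia. }
  destruct (kkt_exists p m N A y eta xs Hp He Hopt Hbm FR) as [mu [Hmu Hkkt]].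
  set (c := tmatvec m A (resid m N A y xs)).
  assert (Hc0 : forall j, (j < N)%nat -> xs j = 0 -> c j = 0).
  { intros j Hj E. specialize (Hkkt j Hj). rewrite E in Hkkt. unfold dphi in Hkkt. rewrite sgn_0 in Hkkt. fold c in Hkkt. lra. }
  destruct (Nat.le_gt_cases (N - m + 1) (supp_card N xs)) as [|Hlt]; auto. exfalso.
  set (P2 := fun i => if Req_dec_T (xs i) 0 then true else false).
  set (Z := filter P2 (seq 0 N)).
  assert (HlenZ : (m <= length Z)%nat).
  { assert (H := filter_len2 (fun i => if Req_dec_T (xs i) 0 then false else true) (seq 0 N)).
    rewrite length_seq in H. unfold supp_card in Hlt.
    replace (filter (fun i => negb (if Req_dec_T (xs i) 0 then false else true)) (seq 0 N)) with Z in H.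
    lia. unfold Z, P2. apply filter_ext. intros i. destruct (Req_dec_T (xs i) 0); auto. }
  set (s := fun k => nth k Z O).
  assert (Hs : forall k, (k < length Z)%nat -> (s k < N)%nat /\ xs (s k) = 0).
  { intros k Hk. assert (Hin : In (s k) Z) by (apply nth_In; auto).
    unfold Z in Hin. apply filter_In in Hin. destruct Hin as [H1 H2]. apply in_seq in H1. split. lia.
    unfold P2 in H2. destruct (Req_dec_T (xs (s k)) 0); auto; discriminate. }
  assert (Hinv : invertible m (fun i k => A i (s k))).
  { apply HA. intros k l Hkl Hl. unfold s, Z. apply filter_sorted. lia. fold Z. lia. intros k Hk. apply Hs. lia. }
  destruct (r_nonzero p m N A y eta xs Hp He Hopt Hbm) as [i [Hi Hri]].
  apply Hri. apply (inv_kernel m _ _ Hinv); auto.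
  intros k Hk. destruct (Hs k ltac:(lia)) as [H1 H2]. apply (Hc0 _ H1 H2).
Qed.

Theorem proposition3p2 (p : R) (m N : nat) (A : nat -> nat -> R) (y : nat -> R) (eta : R) :
  1 < p ->
  (* (i) *)
  ((full_row_rank m N A -> 0 < eta -> below_min_norm p m N A y eta ->
    exists xs : nat -> R,
      optimal p m N A y eta xs /\
      (forall z, optimal p m N A y eta z -> forall i, (i < N)%nat -> z i = xs i) /\
      (exists mu : R,
         kkt p m N A y eta xs mu /\
         (forall mu', kkt p m N A y eta xs mu' -> mu' = mu) /\
         0 < mu) /\
      pnorm p N xs = eta)
  /\
  (* (ii) *)
   ((m <= N)%nat -> all_square_submatrices_invertible m N A ->
    (exists i, (i < m)%nat /\ y i <> 0) ->
    0 < eta -> below_min_norm p m N A y eta ->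
    forall xs, optimal p m N A y eta xs ->
      (N - m + 1 <= supp_card N xs)%nat)).
Proof. intros Hp. split.
  - intros FR He Hbm. destruct (exists_opt p m N A y eta Hp He) as [xs Hopt].
    assert (Hb := boundary p m N A y eta xs Hp He Hopt Hbm FR).
    exists xs. split; [auto|]. split.
    { intros z Hz i Hi. apply (opt_unique p m N A y eta xs z); auto. }
    split; [|apply pnorm_eq; auto].
    destruct (kkt_exists p m N A y eta xs Hp He Hopt Hbm FR) as [mu [Hmu Hkkt]].
    exists mu. split; [|split; auto].
    + split; [exact Hkkt|]. rewrite Hb. split; [lra|]. split; [lra|ring].
    + intros mu' [Hk' _].
      assert (exists j, (j < N)%nat /\ xs j <> 0).
      { apply NNPP. intros Hn. assert (fpow p N xs = 0).
        { unfold fpow. rewrite <- (rsum_zero N). apply rsum_ext. intros j Hj.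
          destruct (Req_dec (xs j) 0) as [E|E]. rewrite E; apply abspow_0. exfalso; apply Hn; exists j; auto. }
        assert (0 < Rpower eta p) by apply Rpower_pos. lra. }
      destruct H as [j [Hj Hx]]. specialize (Hk' j Hj). specialize (Hkkt j Hj).
      assert (Hg : dphi p (xs j) <> 0) by (apply dphi_nz; auto).
      change (grad_fpow p xs j) with (dphi p (xs j)) in Hk'.
      apply (Rmult_eq_reg_r (dphi p (xs j))); auto. lra.
  - intros HmN HA _ He Hbm xs Hopt. apply (part_ii p m N A y eta); auto.
Qed.
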